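(* Let $\mathcal{X},\mathcal{Y}$ be finite, $P_{\bar X}$ an $m$-type on $\mathcal{X}$, $P_{Y|X}$ a channel, $P_{\bar XY}=P_{\bar X}P_{Y|X}$ with output $P_Y$, and $R>I(P_{\bar X},P_{Y|X})>0$. For a channel $Q_{Y|X}$ write $Q_Y=\sum_xP_{\bar X}(x)Q_{Y|X}(\cdot|x)$ and define \[ \aleph(R,P_{\bar X},P_{Y|X})=\min_{Q_{Y|X}}\Big\{D(P_{\bar X}Q_{Y|X}\|P_{\bar XY})+\tfrac12\big[R-D(P_{\bar X}Q_{Y|X}\|P_{\bar X}Q_Y)\big]_+\Big\}, \] \[ \beth(R,P_{\bar X},P_{Y|X})=\min_{Q_{Y|X}}\Big\{D(P_{\bar X}Q_{Y|X}\|P_{\bar XY})+\big[R-G(Q_{Y|X}\|P_{Y|X}|P_{\bar X})\big]_+\Big\}, \] where, with $(\bar X,\widetilde Y)\sim P_{\bar X}Q_{Y|X}$, \[ G(Q_{Y|X}\|P_{Y|X}|P_{\bar X})=H(Q_Y)-\mathbb{E}\big[\imath_{P_{Y|X}}(\widetilde Y|\bar X)\big]+\min_{R_{Y|X}:\ \sum_xP_{\bar X}(x)R_{Y|X}(\cdot|x)=Q_Y}D(P_{\bar X}R_{Y|X}\|P_{\bar XY}). \] Then $\aleph(R,P_{\bar X},P_{Y|X})\ge\frac12\beth(R,P_{\bar X},P_{Y|X})$.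
   Context: All minima over $Q_{Y|X}$, $R_{Y|X}$ range over channels from $\mathcal{X}$ to $\mathcal{Y}$. $[f]_+=\max\{0,f\}$, $D$ is relative entropy, $H$ is entropy, $\imath_{P_{Y|X}}(y|x)=\log\frac1{P_{Y|X}(y|x)}$. An $m$-type is a distribution with probabilities in $\{0,1/m,\dots,1\}$. *)

(* Defs.v *)
From HB Require Import structures.
From mathcomp Require Import all_boot all_order all_algebra.
From mathcomp Require Import all_classical all_reals.
From mathcomp Require Import ereal sequences exp.
Set Implicit Arguments. Unset Strict Implicit. Unset Printing Implicit Defensive.
Import Order.TTheory GRing.Theory Num.Theory.
Local Open Scope ring_scope.
Local Open Scope classical_set_scope.

Section Defs.
Variable R : realType.

Definition is_dist (T : finType) (P : T -> R) : Prop :=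
  (forall a, 0 <= P a) /\ \sum_(a : T) P a = 1.

Definition is_channel (X Y : finType) (W : X -> Y -> R) : Prop :=
  forall x, is_dist (W x).

Definition is_mtype (X : finType) (m : nat) (P : X -> R) : Prop :=
  is_dist P /\ forall x, exists k : nat, (k <= m)%N /\ P x = k%:R / m%:R.

Definition joint (X Y : finType) (P : X -> R) (Q : X -> Y -> R) : X * Y -> R :=
  fun xy => P xy.1 * Q xy.1 xy.2.

Definition outdist (X Y : finType) (P : X -> R) (Q : X -> Y -> R) : Y -> R :=
  fun y => \sum_(x : X) P x * Q x y.

Definition prodd (X Y : finType) (P : X -> R) (Q : Y -> R) : X * Y -> R :=
  fun xy => P xy.1 * Q xy.2.

Definition relent (T : finType) (P Q : T -> R) : \bar R :=
  if [forall a, (0 < P a) ==> (0 < Q a)] then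
    (\sum_(a : T) (if 0 < P a then P a * ln (P a / Q a) else 0))%:E
  else +oo%E.

Definition entropy (T : finType) (P : T -> R) : R :=
  - \sum_(a : T) (if 0 < P a then P a * ln (P a) else 0).

Definition idens (X Y : finType) (W : X -> Y -> R) (x : X) (y : Y) : \bar R :=
  if 0 < W x y then (- ln (W x y))%:E else +oo%E.

Definition expect_idens (X Y : finType) (P : X -> R) (Q W : X -> Y -> R) : \bar R :=
  (\sum_(xy : X * Y | (0 < joint P Q xy)%R)
      (joint P Q xy)%:E * idens W xy.1 xy.2)%E.

Definition posp (f : \bar R) : \bar R := Order.max 0%E f.

Definition mutinf (X Y : finType) (P : X -> R) (W : X -> Y -> R) : \bar R :=
  relent (joint P W) (prodd P (outdist P W)).

Definition Gfun (X Y : finType) (P : X -> R) (Q W : X -> Y -> R) : \bar R :=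
  ((entropy (outdist P Q))%:E - expect_idens P Q W
   + ereal_inf [set relent (joint P V) (joint P W) | V in
                 [set V : X -> Y -> R | is_channel V /\ outdist P V = outdist P Q]])%E.

Definition aleph (X Y : finType) (Rt : R) (P : X -> R) (W : X -> Y -> R) : \bar R :=
  ereal_inf [set (relent (joint P Q) (joint P W)
                  + (2^-1)%:E * posp (Rt%:E - relent (joint P Q) (prodd P (outdist P Q))))%E
            | Q in [set Q : X -> Y -> R | is_channel Q]].

Definition beth (X Y : finType) (Rt : R) (P : X -> R) (W : X -> Y -> R) : \bar R :=
  ereal_inf [set (relent (joint P Q) (joint P W) + posp (Rt%:E - Gfun P Q W))%E
            | Q in [set Q : X -> Y -> R | is_channel Q]].

End Defs.

(* Main.v *)
Require Import Defs.
From HB Require Import structures.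
From mathcomp Require Import all_boot all_order all_algebra.
From mathcomp Require Import all_classical all_reals.
From mathcomp Require Import ereal sequences exp.
From mathcomp Require Import lra.
Import Order.TTheory GRing.Theory Num.Theory.
Set Implicit Arguments. Unset Strict Implicit.
Local Open Scope ring_scope.

Section Helpers.
Variable R : realType.

Lemma pos_split (a b : R) : 0 <= a -> 0 <= b -> 0 < a * b -> 0 < a /\ 0 < b.
Proof.
rewrite !le0r => /orP[/eqP->|a0] /orP[/eqP->|b0]; rewrite ?mul0r ?mulr0 ?ltxx //.
Qed.

Lemma ln_gibbs (p q : R) : 0 < p -> 0 < q -> p - q <= p * ln (p / q).
Proof.
move=> p0 q0.
have h : ln (q / p) <= q / p - 1.
  have := @le_ln1Dx R (q / p - 1).
  rewrite (addrC 1) subrK; apply; have : 0 < q / p by apply: divr_gt0.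
  lra.
have e : ln (p / q) = - ln (q / p).
  by rewrite -[p / q]invf_div lnV // posrE divr_gt0.
rewrite e.
have : p * ln (q / p) <= p * (q / p - 1) by rewrite ler_wpM2l // ltW.
rewrite mulrBr mulr1 mulrCA divff ?mulr1 ?gt_eqF //.
lra.
Qed.

Lemma gibbs (T : finType) (p q : T -> R) :
  (forall a, 0 <= p a) -> \sum_a p a = 1 -> (forall a, 0 <= q a) -> \sum_a q a <= 1 ->
  (0 <= relent p q)%E.
Proof.
move=> p0 p1 q0 q1; rewrite /relent; case: ifP => [/forallP H|]; last by rewrite le0y.
rewrite lee_fin.
apply: (@le_trans _ _ (\sum_a (p a - q a))).
  by rewrite sumrB p1 subr_ge0.
apply: ler_sum => a _; case: ifP => pa.
  by apply: ln_gibbs => //; exact: (implyP (H a) pa).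
move/negbT: pa; rewrite -leNgt => pa.
have := q0 a; have := p0 a; lra.
Qed.

Lemma joint_dist (X Y : finType) (P : X -> R) (V : X -> Y -> R) :
  is_dist P -> is_channel V ->
  (forall a, 0 <= joint P V a) /\ \sum_a joint P V a = 1.
Proof.
move=> [P0 P1] HV; split.
  by case=> x y; rewrite /joint mulr_ge0 //; case: (HV x).
rewrite -(pair_bigA _ (fun x y => joint P V (x, y))) /= -[RHS]P1.
apply: eq_bigr => x _; rewrite /joint /= -big_distrr /=.
by case: (HV x) => _ ->; rewrite mulr1.
Qed.

Local Open Scope ereal_scope.

Lemma posp_ge0 (x : \bar R) : 0 <= posp x.
Proof. by rewrite /posp le_max lexx. Qed.

Lemma key (X Y : finType) (P : X -> R) (W Q : X -> Y -> R) (Rt : R) :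
  is_dist P -> is_channel W -> is_channel Q ->
  (2^-1)%:E * (relent (joint P Q) (joint P W) + posp (Rt%:E - Gfun P Q W))
  <= relent (joint P Q) (joint P W)
     + (2^-1)%:E * posp (Rt%:E - relent (joint P Q) (prodd P (outdist P Q))).
Proof.
move=> [P0 P1] HW HQ.
have Q0 : forall x y, (0 <= Q x y)%R by move=> x y; case: (HQ x).
have W0 : forall x y, (0 <= W x y)%R by move=> x y; case: (HW x).
have [J0 J1] := joint_dist (conj P0 P1) HQ.
have [JW0 JW1] := joint_dist (conj P0 P1) HW.
have D0 : 0 <= relent (joint P Q) (joint P W).
  by apply: gibbs => //; rewrite JW1.
have h0 : (0 <= 2^-1 :> R)%R by [].
case E: [forall a, (0 < joint P Q a)%R ==> (0 < joint P W a)%R]; last first.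
  rewrite /relent E.
  apply: le_trans (leey _) (leeDl _ _).
  by rewrite mule_ge0 // posp_ge0.
pose qy := outdist P Q.
have qy0 : forall y, (0 <= qy y)%R by move=> y; apply: sumr_ge0 => x _; by rewrite mulr_ge0 ?P0 ?Q0.
pose S1 := (\sum_(xy : X * Y) joint P Q xy * ln (Q xy.1 xy.2))%R.
pose S2 := (\sum_(xy : X * Y) joint P Q xy * ln (W xy.1 xy.2))%R.
pose S3 := (\sum_y qy y * ln (qy y))%R.
have Jsplit : forall xy, (0 < joint P Q xy)%R -> (0 < P xy.1)%R /\ (0 < Q xy.1 xy.2)%R.
  by case=> x y; apply: pos_split.
have Wpos : forall xy, (0 < joint P Q xy)%R -> (0 < W xy.1 xy.2)%R.
  move=> xy Jp; have := implyP (forallP E xy) Jp.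
  by case/pos_split => //; apply: P0.
have Jz : forall xy, ~~ (0 < joint P Q xy)%R -> joint P Q xy = 0%R.
  by move=> xy; rewrite -leNgt => h; apply/le_anti; rewrite h J0.
have Dval : relent (joint P Q) (joint P W) = (S1 - S2)%R%:E.
  rewrite /relent E; congr EFin; rewrite /S1 /S2 -sumrB; apply: eq_bigr => xy _.
  case: ifP => Jp; last by rewrite Jz ?Jp // !mul0r subrr.
  have [Px Qxy] := Jsplit xy Jp; have Wxy := Wpos xy Jp.
  rewrite -mulrBr /joint -mulf_div divff ?gt_eqF // mul1r ln_div // posrE.
have qypos : forall xy, (0 < joint P Q xy)%R -> (0 < qy xy.2)%R.
  case=> x y Jp; apply: (lt_le_trans Jp).
  rewrite /qy /outdist (bigD1 x) //= lerDl; apply: sumr_ge0 => x' _; by rewrite mulr_ge0 ?P0 ?Q0.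
have E2 : [forall a, (0 < joint P Q a)%R ==> (0 < prodd P (outdist P Q) a)%R].
  apply/forallP => xy; apply/implyP => Jp; rewrite /prodd mulr_gt0 //.
    by case: (Jsplit xy Jp).
  exact: qypos.
have S3e : (\sum_(xy : X * Y) joint P Q xy * ln (qy xy.2))%R = S3.
  rewrite -(pair_bigA _ (fun x y => joint P Q (x, y) * ln (qy (x, y).2)))%R /=.
  rewrite exchange_big /S3; apply: eq_bigr => y _.
  by rewrite /qy /outdist big_distrl.
have Ival : relent (joint P Q) (prodd P (outdist P Q)) = (S1 - S3)%R%:E.
  rewrite /relent E2; congr EFin; rewrite /S1 -S3e -sumrB; apply: eq_bigr => xy _.
  case: ifP => Jp; last by rewrite Jz ?Jp // !mul0r subrr.
  have [Px Qxy] := Jsplit xy Jp; have qyp := qypos xy Jp.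
  rewrite -mulrBr /joint /prodd -mulf_div divff ?gt_eqF // mul1r ln_div // posrE.
have Hval : entropy (outdist P Q) = (- S3)%R.
  rewrite /entropy /S3; congr GRing.opp; apply: eq_bigr => y _.
  case: ifP => // /negbT; rewrite -leNgt => h.
  have e : qy y = 0%R by apply/le_anti; apply/andP; split; [exact: h | exact: qy0].
  by rewrite e mul0r.
have Eval : expect_idens P Q W = (- S2)%R%:E.
  rewrite /expect_idens /S2 -sumrN -sumEFin big_mkcond /=; apply: eq_bigr => xy _.
  case: ifP => Jp; last by rewrite Jz ?Jp // mul0r oppr0.
  by rewrite /idens Wpos // -EFinM mulrN.
have M0 : 0 <= ereal_inf [set relent (joint P V) (joint P W) | V in
                 [set V : X -> Y -> R | is_channel V /\ outdist P V = outdist P Q]].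
  apply: le_ereal_inf_tmp => _ [V [HV _] <-].
  have [JV0 JV1] := joint_dist (conj P0 P1) HV.
  by apply: gibbs => //; rewrite JW1.
have Gge : ((S1 - S3) - (S1 - S2))%R%:E <= Gfun P Q W.
  rewrite /Gfun Hval Eval -EFinB.
  apply: le_trans (leeDl _ M0); rewrite lee_fin; lra.
rewrite Dval Ival.
set i := (S1 - S3)%R; set d := (S1 - S2)%R.
have d0 : (0 <= d)%R by rewrite -lee_fin -Dval.
set m2 := Num.max 0%R (Rt - i)%R.
have pm2 : posp (Rt%:E - i%:E) = m2%:E by rewrite /posp /m2 -EFinB EFin_max.
have pG : posp (Rt%:E - Gfun P Q W) <= (d + m2)%R%:E.
  move: Gge; case: (Gfun P Q W) => [g| |] // hg.
  - rewrite /posp -EFinB -EFin_max lee_fin ge_max; apply/andP; split.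
      by rewrite addr_ge0 // le_max lexx.
    rewrite lee_fin in hg.
    have : (Rt - i <= m2)%R by rewrite le_max lexx orbT.
    rewrite /i /d; lra.
  - by rewrite /posp /= addeNy max_l ?leNy0 // lee_fin addr_ge0 // le_max lexx orTb.
apply: (@le_trans _ _ ((2^-1)%:E * (d%:E + (d + m2)%R%:E))).
  by apply: lee_wpmul2l => //; apply: leeD.
apply: (@le_trans _ _ (d%:E + (2^-1)%:E * m2%:E)); last first.
  apply: leeD => //; apply: lee_wpmul2l => //; rewrite -pm2; exact: lexx.
rewrite -!EFinD -!EFinM lee_fin.
have : (0 <= m2)%R by rewrite le_max lexx.
lra.
Qed.

End Helpers.

Theorem proposition4 (R : realType) (X Y : finType) (m : nat)
  (P : X -> R) (W : X -> Y -> R) (Rt : R) :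
  is_mtype m P -> is_channel W ->
  (0 < mutinf P W)%E -> (mutinf P W < Rt%:E)%E ->
  ((2^-1)%:E * beth Rt P W <= aleph Rt P W)%E.
Proof.
move=> [HP _] HW _ _.
apply: le_ereal_inf_tmp => _ [Q HQ <-].
apply: le_trans (key Rt HP HW HQ).
apply: lee_wpmul2l => //.
by apply: ereal_inf_lbound; exists Q.
Qed.
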